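(* Consider the chain pendulum on a cart described in the context, with configuration $(q_1,\dots,q_n,x)\in(\mathsf{S}^2)^n\times\mathbb{R}^2$, Lagrangian $L=T-V$, and a horizontal control force $u\in\mathbb{R}^2$ acting on the cart. The Euler–Lagrange equations of this system on $(\mathsf{S}^2)^n\times\mathbb{R}^2$ (obtained from the Lagrange–d'Alembert principle, with variations $\delta q_i=\xi_i\times q_i$, $\xi_i\cdot q_i=0$, and virtual work $u\cdot\delta x$) are \[ M_{00}\ddot x+\sum_{j=1}^n M_{0j}\ddot q_j=u, \] and, for each $i=1,\dots,n$, \[ -\hat q_i^2 M_{i0}\ddot x+M_{ii}\ddot q_i-\sum_{j\neq i}M_{ij}\hat q_i^2\ddot q_j=-\|\dot q_i\|^2M_{ii}q_i-\Big(\sum_{a=i}^n m_a\Big)g\,l_i\,\hat q_i^2e_3 . \] Equivalently, in terms of the angular velocities $\omega_i\in\mathbb{R}^3$ (with $\omega_i\cdot q_i=0$), they can be written as \[ M_{00}\ddot x-\sum_{j=1}^n M_{0j}\hat q_j\dot\omega_j=\sum_{j=1}^n M_{0j}\|\omega_j\|^2q_j+u, \] \[ \hat q_iM_{i0}\ddot x+M_{ii}\dot\omega_i-\sum_{j\neq i}M_{ij}\hat q_i\hat q_j\dot\omega_j=\sum_{j\neq i}M_{ij}\|\omega_j\|^2\hat q_iq_j+\Big(\sum_{a=i}^n m_a\Big)g\,l_i\,\hat q_ie_3,\quad i=1,\dots,n, \] \[ \dot q_i=\omega_i\times q_i,\quad i=1,\dots,n. \]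
   Context: Let $n\ge1$. $\mathsf{S}^2=\{q\in\mathbb{R}^3:\|q\|=1\}$. Let $e_1,e_2,e_3$ be the standard basis of $\mathbb{R}^3$, with $e_3$ the direction of gravity, $g>0$ the gravitational acceleration, and $C=[e_1,e_2]\in\mathbb{R}^{3\times2}$. For $y\in\mathbb{R}^3$, $\hat y$ denotes the $3\times3$ skew-symmetric matrix with $\hat y z=y\times z$ for all $z\in\mathbb{R}^3$. A cart of mass $m>0$ moves in a horizontal plane, with position $x\in\mathbb{R}^2$ (so its inertial position is $Cx$). A serial chain of $n$ massless links joined by spherical joints is attached to the cart; link $i$ has length $l_i>0$, unit direction vector $q_i\in\mathsf{S}^2$, and a point mass $m_i>0$ at its outboard end, whose position is $x_i=Cx+\sum_{a=1}^i l_aq_a$. The angular velocity $\omega_i\in\mathbb{R}^3$ of link $i$ satisfies $\dot q_i=\omega_i\times q_i$, $\omega_i\cdot q_i=0$. Define $M_{00}=m+\sum_{i=1}^n m_i\in\mathbb{R}$, $M_{0i}=\big(\sum_{a=i}^n m_a\big)l_i\,C^T\in\mathbb{R}^{2\times3}$, $M_{i0}=M_{0i}^T$, and $M_{ij}=\big(\sum_{a=\max\{i,j\}}^n m_a\big)l_il_j\in\mathbb{R}$ for $i,j=1,\dots,n$. The kinetic energy is $T=\tfrac12M_{00}\|\dot x\|^2+\dot x\cdot\sum_{i=1}^nM_{0i}\dot q_i+\tfrac12\sum_{i,j=1}^nM_{ij}\dot q_i\cdot\dot q_j$, the potential energy is $V=-\sum_{i=1}^n\big(\sum_{a=i}^n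 m_a\big)g\,l_i\,e_3\cdot q_i$, and $L=T-V$. A control force $u\in\mathbb{R}^2$ acts on the cart. *)

(* Defs.v *)
From Stdlib Require Import Reals Lra Lia.
From Coquelicot Require Import Coquelicot.
Open Scope R_scope.

Record V3 := mkV3 { c1 : R; c2 : R; c3 : R }.
Record V2 := mkV2 { d1 : R; d2 : R }.

Definition v3zero : V3 := mkV3 0 0 0.
Definition v3add (a b : V3) : V3 := mkV3 (c1 a + c1 b) (c2 a + c2 b) (c3 a + c3 b).
Definition v3opp (a : V3) : V3 := mkV3 (- c1 a) (- c2 a) (- c3 a).
Definition v3scal (k : R) (a : V3) : V3 := mkV3 (k * c1 a) (k * c2 a) (k * c3 a).
Definition v3dot (a b : V3) : R := c1 a * c1 b + c2 a * c2 b + c3 a * c3 b.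
Definition v3norm2 (a : V3) : R := v3dot a a.
Definition v3cross (a b : V3) : V3 :=
  mkV3 (c2 a * c3 b - c3 a * c2 b) (c3 a * c1 b - c1 a * c3 b) (c1 a * c2 b - c2 a * c1 b).
(** [hat y z] is the action of the skew matrix \hat y on z, i.e. y x z. *)
Definition hat (y z : V3) : V3 := v3cross y z.
Definition hat2 (y z : V3) : V3 := hat y (hat y z).
Definition e3 : V3 := mkV3 0 0 1.

Definition v2zero : V2 := mkV2 0 0.
Definition v2add (a b : V2) : V2 := mkV2 (d1 a + d1 b) (d2 a + d2 b).
Definition v2scal (k : R) (a : V2) : V2 := mkV2 (k * d1 a) (k * d2 a).
Definition v2dot (a b : V2) : R := d1 a * d1 b + d2 a * d2 b.

(** C = [e1, e2] : R^2 -> R^3 and its transpose C^T : R^3 -> R^2 *)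
Definition Cmat (x : V2) : V3 := mkV3 (d1 x) (d2 x) 0.
Definition CT (v : V3) : V2 := mkV2 (c1 v) (c2 v).

Fixpoint sumR (N : nat) (f : nat -> R) : R :=
  match N with O => 0 | S N' => sumR N' f + f N end.
Fixpoint sumV3 (N : nat) (f : nat -> V3) : V3 :=
  match N with O => v3zero | S N' => v3add (sumV3 N' f) (f N) end.
Fixpoint sumV2 (N : nat) (f : nat -> V2) : V2 :=
  match N with O => v2zero | S N' => v2add (sumV2 N' f) (f N) end.

Definition dV3 (f : R -> V3) (t : R) : V3 :=
  mkV3 (Derive (fun s => c1 (f s)) t) (Derive (fun s => c2 (f s)) t)
       (Derive (fun s => c3 (f s)) t).
Definition dV2 (f : R -> V2) (t : R) : V2 :=
  mkV2 (Derive (fun s => d1 (f s)) t) (Derive (fun s => d2 (f s)) t).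

Definition C1 (f : R -> R) : Prop :=
  (forall t, ex_derive f t) /\ (forall t, continuous (Derive f) t).
Definition C2 (f : R -> R) : Prop := C1 f /\ C1 (Derive f).

Definition C1_V3 (f : R -> V3) : Prop :=
  C1 (fun s => c1 (f s)) /\ C1 (fun s => c2 (f s)) /\ C1 (fun s => c3 (f s)).
Definition C2_V3 (f : R -> V3) : Prop :=
  C2 (fun s => c1 (f s)) /\ C2 (fun s => c2 (f s)) /\ C2 (fun s => c3 (f s)).
Definition C1_V2 (f : R -> V2) : Prop :=
  C1 (fun s => d1 (f s)) /\ C1 (fun s => d2 (f s)).
Definition C2_V2 (f : R -> V2) : Prop :=
  C2 (fun s => d1 (f s)) /\ C2 (fun s => d2 (f s)).
Definition cont_V2 (f : R -> V2) : Prop :=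
  (forall t, continuous (fun s => d1 (f s)) t) /\
  (forall t, continuous (fun s => d2 (f s)) t).

(** * Inertia terms.  Parameters: n links, cart mass m, point masses
    [mass i] and lengths [len i] (i = 1..n), gravity g. *)
Section Inertia.
Variables (n : nat) (m : R) (mass len : nat -> R) (g : R).

Definition Mbar (i : nat) : R :=
  sumR n (fun a => if (i <=? a)%nat then mass a else 0).
Definition M00 : R := m + sumR n mass.
Definition M0 (i : nat) (v : V3) : V2 := v2scal (Mbar i * len i) (CT v).
(** M_{i0} w = M_{0i}^T w = (\sum_{a=i}^n m_a) l_i C w *)
Definition Mi0 (i : nat) (w : V2) : V3 := v3scal (Mbar i * len i) (Cmat w).
Definition Mij (i j : nat) : R := Mbar (Nat.max i j) * len i * len j.

Definition Kin (xd : V2) (qd : nat -> V3) : R :=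
  / 2 * M00 * v2dot xd xd
  + v2dot xd (sumV2 n (fun i => M0 i (qd i)))
  + / 2 * sumR n (fun i => sumR n (fun j => Mij i j * v3dot (qd i) (qd j))).
Definition Pot (q : nat -> V3) : R :=
  - sumR n (fun i => Mbar i * g * len i * v3dot e3 (q i)).
Definition Lag (xd : V2) (q qd : nat -> V3) : R := Kin xd qd - Pot q.

(** Lagrange–d'Alembert principle along the trajectory (x, q) with control u:
    for every time interval [a,b] and every C^1 variation
    delta x, delta q_i = xi_i x q_i (xi_i . q_i = 0) vanishing at a and b,
    \int_a^b (delta L + u . delta x) dt = 0, where delta L is the first
    variation of L in the direction of the variation. *)
Definition LdA (x : R -> V2) (q : nat -> R -> V3) (u : R -> V2) : Prop :=
  forall a b : R, a < b ->
  forall (dx : R -> V2) (xi : nat -> R -> V3),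
    C1_V2 dx ->
    (forall i, (1 <= i <= n)%nat -> C1_V3 (xi i)) ->
    (forall i t, (1 <= i <= n)%nat -> v3dot (xi i t) (q i t) = 0) ->
    dx a = v2zero -> dx b = v2zero ->
    (forall i, (1 <= i <= n)%nat -> xi i a = v3zero /\ xi i b = v3zero) ->
    let dq := fun i t => v3cross (xi i t) (q i t) in
    RInt (fun t =>
       Derive (fun e =>
         Lag (v2add (dV2 x t) (v2scal e (dV2 dx t)))
             (fun i => v3add (q i t) (v3scal e (dq i t)))
             (fun i => v3add (dV3 (q i) t) (v3scal e (dV3 (dq i) t)))) 0
       + v2dot (u t) (dx t)) a b = 0.

Definition EL_q (x : R -> V2) (q : nat -> R -> V3) (u : R -> V2) : Prop :=
  forall t : R,
    v2add (v2scal M00 (dV2 (dV2 x) t))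
          (sumV2 n (fun j => M0 j (dV3 (dV3 (q j)) t))) = u t /\
    forall i, (1 <= i <= n)%nat ->
      v3add (v3add (v3opp (hat2 (q i t) (Mi0 i (dV2 (dV2 x) t))))
                   (v3scal (Mij i i) (dV3 (dV3 (q i)) t)))
            (v3opp (sumV3 n (fun j => if (j =? i)%nat then v3zero
                       else v3scal (Mij i j) (hat2 (q i t) (dV3 (dV3 (q j)) t)))))
      = v3add (v3scal (- (v3norm2 (dV3 (q i) t) * Mij i i)) (q i t))
              (v3scal (- (Mbar i * g * len i)) (hat2 (q i t) e3)).

Definition EL_omega (x : R -> V2) (q om : nat -> R -> V3) (u : R -> V2) : Prop :=
  forall t : R,
    v2add (v2scal M00 (dV2 (dV2 x) t))
          (v2scal (-1) (sumV2 n (fun j => M0 j (hat (q j t) (dV3 (om j) t)))))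
      = v2add (sumV2 n (fun j => M0 j (v3scal (v3norm2 (om j t)) (q j t)))) (u t) /\
    forall i, (1 <= i <= n)%nat ->
      v3add (v3add (hat (q i t) (Mi0 i (dV2 (dV2 x) t)))
                   (v3scal (Mij i i) (dV3 (om i) t)))
            (v3opp (sumV3 n (fun j => if (j =? i)%nat then v3zero
                       else v3scal (Mij i j) (hat (q i t) (hat (q j t) (dV3 (om j) t))))))
      = v3add (sumV3 n (fun j => if (j =? i)%nat then v3zero
                   else v3scal (Mij i j * v3norm2 (om j t)) (hat (q i t) (q j t))))
              (v3scal (Mbar i * g * len i) (hat (q i t) e3)).

End Inertia.

(* Main.v *)
From Pilot Require Import Defs.
From Stdlib Require Import Reals.
From Coquelicot Require Import Coquelicot.
Open Scope R_scope.
From Stdlib Require Import Lra Lia.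
Import Pilot.Defs.

Lemma RD_plus (f : R -> R) (g : R -> R) (t : R) (a : R) (b : R) : is_derive f t a -> is_derive g t b ->
  is_derive (fun s => f s + g s) t (a + b).
Proof. intros; apply (is_derive_plus f g); auto. Qed.
Lemma RD_minus (f : R -> R) (g : R -> R) (t : R) (a : R) (b : R) : is_derive f t a -> is_derive g t b ->
  is_derive (fun s => f s - g s) t (a - b).
Proof. intros; apply (is_derive_minus f g); auto. Qed.
Lemma RD_mult (f : R -> R) (g : R -> R) (t : R) (a : R) (b : R) : is_derive f t a -> is_derive g t b ->
  is_derive (fun s => f s * g s) t (a * g t + f t * b).
Proof. intros; apply (is_derive_mult f g); auto. intros; apply Rmult_comm. Qed.
Lemma RD_const (c : R) (t : R) : is_derive (fun _ => c) t 0.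
Proof. apply (is_derive_const c). Qed.
Lemma RD_scal (f : R -> R) (t : R) (k : R) (a : R) : is_derive f t a -> is_derive (fun s => k * f s) t (k * a).
Proof. apply is_derive_scal. Qed.
Lemma RD_opp (f : R -> R) (t : R) (a : R) : is_derive f t a -> is_derive (fun s => - f s) t (- a).
Proof. intros; apply (@is_derive_opp R_AbsRing R_NormedModule f); auto. Qed.
Lemma RD_eq (f : R -> R) (t : R) (a : R) (b : R) : is_derive f t a -> a = b -> is_derive f t b.
Proof. intros; subst; auto. Qed.
Lemma RD_ext (f : R -> R) (g : R -> R) (t : R) (a : R) : (forall s, f s = g s) -> is_derive f t a -> is_derive g t a.
Proof. intros H H'. apply (is_derive_ext f g); auto. Qed.

Lemma RC_plus (f : R -> R) (g : R -> R) (t : R) : continuous f t -> continuous g t -> continuous (fun s => f s + g s) t.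
Proof. intros; apply (continuous_plus f g); auto. Qed.
Lemma RC_minus (f : R -> R) (g : R -> R) (t : R) : continuous f t -> continuous g t -> continuous (fun s => f s - g s) t.
Proof. intros; apply (continuous_minus f g); auto. Qed.
Lemma RC_mult (f : R -> R) (g : R -> R) (t : R) : continuous f t -> continuous g t -> continuous (fun s => f s * g s) t.
Proof. intros; apply (continuous_mult f g); auto. Qed.
Lemma RC_const (c : R) (t : R) : continuous (fun _ : R => c) t.
Proof. apply continuous_const. Qed.
Lemma RC_id (t : R) : continuous (fun s : R => s) t.
Proof. apply continuous_id. Qed.
Lemma RC_opp (f : R -> R) (t : R) : continuous f t -> continuous (fun s => - f s) t.
Proof. intros; apply (continuous_opp f); auto. Qed.
Lemma RC_ext (f : R -> R) (g : R -> R) (t : R) : (forall s, f s = g s) -> continuous f t -> continuous g t.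
Proof. intros; apply (continuous_ext f g); auto. Qed.

Lemma C1_der (f : R -> R) (t : R) : C1 f -> is_derive f t (Derive f t).
Proof. intros [H _]; apply Derive_correct; auto. Qed.
Lemma C1_cont (f : R -> R) (t : R) : C1 f -> continuous f t.
Proof. intros [H _]; apply (@ex_derive_continuous R_AbsRing R_NormedModule); auto. Qed.
Lemma C1_dcont (f : R -> R) (t : R) : C1 f -> continuous (Derive f) t.
Proof. intros [_ H]; auto. Qed.

Lemma C1_mult (f : R -> R) (g : R -> R) : C1 f -> C1 g -> C1 (fun s => f s * g s).
Proof.
  intros Hf Hg; split.
  - intro t; eexists; apply RD_mult; apply C1_der; auto.
  - intro t. apply RC_ext with (fun s => Derive f s * g s + f s * Derive g s).
    + intro s; symmetry; apply is_derive_unique, RD_mult; apply C1_der; auto.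
    + apply RC_plus; apply RC_mult; auto using C1_cont, C1_dcont.
Qed.
Lemma C1_minus (f : R -> R) (g : R -> R) : C1 f -> C1 g -> C1 (fun s => f s - g s).
Proof.
  intros Hf Hg; split.
  - intro t; eexists; apply RD_minus; apply C1_der; auto.
  - intro t. apply RC_ext with (fun s => Derive f s - Derive g s).
    + intro s; symmetry; apply is_derive_unique, RD_minus; apply C1_der; auto.
    + apply RC_minus; auto using C1_dcont.
Qed.
Lemma C1_const (c : R) : C1 (fun _ => c).
Proof.
  split.
  - intro t; eexists; apply RD_const.
  - intro t. apply RC_ext with (fun _ => 0).
    + intro s; symmetry; apply is_derive_unique, RD_const.
    + apply RC_const.
Qed.
Lemma C1_id : C1 (fun s => s).
Proof.
  split.
  - intro t; eexists; apply (is_derive_id t).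
  - intro t. apply RC_ext with (fun _ => 1).
    + intro s; symmetry; apply is_derive_unique, (is_derive_id s).
    + apply RC_const.
Qed.


Lemma V3_eq (v w : V3) : c1 v = c1 w -> c2 v = c2 w -> c3 v = c3 w -> v = w.
Proof. destruct v, w; simpl; intros; subst; reflexivity. Qed.
Lemma V2_eq (v w : V2) : d1 v = d1 w -> d2 v = d2 w -> v = w.
Proof. destruct v, w; simpl; intros; subst; reflexivity. Qed.

Lemma c1_sumV3 N f : c1 (sumV3 N f) = sumR N (fun i => c1 (f i)).
Proof. induction N; simpl; [reflexivity| rewrite IHN; reflexivity]. Qed.
Lemma c2_sumV3 N f : c2 (sumV3 N f) = sumR N (fun i => c2 (f i)).
Proof. induction N; simpl; [reflexivity| rewrite IHN; reflexivity]. Qed.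
Lemma c3_sumV3 N f : c3 (sumV3 N f) = sumR N (fun i => c3 (f i)).
Proof. induction N; simpl; [reflexivity| rewrite IHN; reflexivity]. Qed.
Lemma d1_sumV2 N f : d1 (sumV2 N f) = sumR N (fun i => d1 (f i)).
Proof. induction N; simpl; [reflexivity| rewrite IHN; reflexivity]. Qed.
Lemma d2_sumV2 N f : d2 (sumV2 N f) = sumR N (fun i => d2 (f i)).
Proof. induction N; simpl; [reflexivity| rewrite IHN; reflexivity]. Qed.

Lemma sumR_ext_in N f g : (forall i, (1<=i<=N)%nat -> f i = g i) -> sumR N f = sumR N g.
Proof.
  induction N; simpl; intros H; [reflexivity|].
  rewrite IHN by (intros; apply H; lia). rewrite H by lia. reflexivity.
Qed.
Lemma sumR_plus N f g : sumR N (fun i => f i + g i) = sumR N f + sumR N g.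
Proof. induction N; simpl; [ring|rewrite IHN; ring]. Qed.
Lemma sumR_minus N f g : sumR N (fun i => f i - g i) = sumR N f - sumR N g.
Proof. induction N; simpl; [ring|rewrite IHN; ring]. Qed.
Lemma sumR_scal N k f : sumR N (fun i => k * f i) = k * sumR N f.
Proof. induction N; simpl; [ring|rewrite IHN; ring]. Qed.
Lemma sumR_zero N : sumR N (fun _ => 0) = 0.
Proof. induction N; simpl; [ring|rewrite IHN; ring]. Qed.
Lemma sumR_swap N M f : sumR N (fun i => sumR M (fun j => f i j)) = sumR M (fun j => sumR N (fun i => f i j)).
Proof.
  induction N; simpl. - symmetry; apply sumR_zero.
  - rewrite IHN, <- sumR_plus. reflexivity.
Qed.
Lemma sumR_single N i f : (1<=i<=N)%nat -> (forall j, j<>i -> f j = 0) -> sumR N f = f i.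
Proof.
  induction N; intros Hi H; [lia|]. simpl.
  destruct (Nat.eq_dec i (S N)) as [->|ne].
  - rewrite (sumR_ext_in N f (fun _ => 0)). rewrite sumR_zero; ring.
    intros j Hj; apply H; lia.
  - rewrite IHN by (auto; lia). rewrite (H (S N)) by auto. ring.
Qed.
Lemma sumR_split N i f : (1<=i<=N)%nat ->
  sumR N f = f i + sumR N (fun j => if (j =? i)%nat then 0 else f j).
Proof.
  intros Hi.
  rewrite (sumR_ext_in N f (fun j => (if (j =? i)%nat then f j else 0) + (if (j =? i)%nat then 0 else f j))).
  - rewrite sumR_plus. f_equal. rewrite (sumR_single N i); auto.
    + rewrite Nat.eqb_refl; auto.
    + intros j Hj. apply Nat.eqb_neq in Hj; rewrite Hj; auto.
  - intros j _; destruct (j =? i)%nat; ring.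
Qed.

Lemma RD_sumR N (f : nat -> R -> R) f' t :
  (forall i, (1<=i<=N)%nat -> is_derive (f i) t (f' i)) ->
  is_derive (fun s => sumR N (fun i => f i s)) t (sumR N f').
Proof.
  induction N; intros H; simpl.
  - apply RD_const.
  - apply RD_plus. apply IHN; intros; apply H; lia. apply H; lia.
Qed.
Lemma RC_sumR N (f : nat -> R -> R) t :
  (forall i, (1<=i<=N)%nat -> continuous (f i) t) ->
  continuous (fun s => sumR N (fun i => f i s)) t.
Proof.
  induction N; intros H; simpl.
  - apply RC_const.
  - apply RC_plus. apply IHN; intros; apply H; lia. apply H; lia.
Qed.



Definition der3 (f : R -> V3) t (v : V3) :=
  is_derive (fun s => c1 (f s)) t (c1 v) /\ is_derive (fun s => c2 (f s)) t (c2 v) /\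
  is_derive (fun s => c3 (f s)) t (c3 v).
Definition der2 (f : R -> V2) t (v : V2) :=
  is_derive (fun s => d1 (f s)) t (d1 v) /\ is_derive (fun s => d2 (f s)) t (d2 v).
Definition cnt3 (f : R -> V3) t :=
  continuous (fun s => c1 (f s)) t /\ continuous (fun s => c2 (f s)) t /\
  continuous (fun s => c3 (f s)) t.
Definition cnt2 (f : R -> V2) t :=
  continuous (fun s => d1 (f s)) t /\ continuous (fun s => d2 (f s)) t.

Ltac sv := cbn [c1 c2 c3 d1 d2 v3add v3scal v3opp v3cross v2add v2scal Cmat CT v3zero v2zero].
Ltac spl := match goal with
 | |- der3 _ _ _ => unfold der3; refine (conj _ (conj _ _))
 | |- der2 _ _ _ => unfold der2; refine (conj _ _)
 | |- cnt3 _ _ => unfold cnt3; refine (conj _ (conj _ _))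
 | |- cnt2 _ _ => unfold cnt2; refine (conj _ _)
 | |- C1_V3 _ /\ C1_V3 _ => split; refine (conj _ (conj _ _))
 | |- C1_V2 _ /\ C1_V2 _ => split; refine (conj _ _)
 end.
Ltac d3 := repeat match goal with H : der3 _ _ _ |- _ => destruct H as (? & ? & ?) end;
           repeat match goal with H : der2 _ _ _ |- _ => destruct H as (? & ?) end;
           repeat match goal with H : cnt3 _ _ |- _ => destruct H as (? & ? & ?) end;
           repeat match goal with H : cnt2 _ _ |- _ => destruct H as (? & ?) end.

Lemma der3_add f g t v w : der3 f t v -> der3 g t w ->
  der3 (fun s => v3add (f s) (g s)) t (v3add v w).
Proof. intros; d3; spl; sv; apply RD_plus; auto. Qed.
Lemma der3_scal k f t v : der3 f t v -> der3 (fun s => v3scal k (f s)) t (v3scal k v).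
Proof. intros; d3; spl; sv; apply RD_scal; auto. Qed.
Lemma der3_opp f t v : der3 f t v -> der3 (fun s => v3opp (f s)) t (v3opp v).
Proof. intros; d3; spl; sv; apply RD_opp; auto. Qed.
Lemma der3_const (c : V3) t : der3 (fun _ => c) t v3zero.
Proof. spl; sv; apply RD_const. Qed.
Lemma der3_cross f g t v w : der3 f t v -> der3 g t w ->
  der3 (fun s => v3cross (f s) (g s)) t (v3add (v3cross v (g t)) (v3cross (f t) w)).
Proof.
  intros; d3; spl; sv; (eapply RD_eq;
  [apply RD_minus; apply RD_mult; eassumption | cbv beta; ring]).
Qed.
Lemma der3_sum N (f : nat -> R -> V3) t v :
  (forall j, (1<=j<=N)%nat -> der3 (f j) t (v j)) ->
  der3 (fun s => sumV3 N (fun j => f j s)) t (sumV3 N v).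
Proof.
  intros H; spl;
  [rewrite c1_sumV3; apply RD_ext with (fun s => sumR N (fun j => c1 (f j s)));
     [intro; rewrite c1_sumV3; auto|apply RD_sumR; intros; apply H; auto]
  |rewrite c2_sumV3; apply RD_ext with (fun s => sumR N (fun j => c2 (f j s)));
     [intro; rewrite c2_sumV3; auto|apply RD_sumR; intros; apply H; auto]
  |rewrite c3_sumV3; apply RD_ext with (fun s => sumR N (fun j => c3 (f j s)));
     [intro; rewrite c3_sumV3; auto|apply RD_sumR; intros; apply H; auto]].
Qed.
Lemma der2_add f g t v w : der2 f t v -> der2 g t w ->
  der2 (fun s => v2add (f s) (g s)) t (v2add v w).
Proof. intros; d3; spl; sv; apply RD_plus; auto. Qed.
Lemma der2_scal k f t v : der2 f t v -> der2 (fun s => v2scal k (f s)) t (v2scal k v).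
Proof. intros; d3; spl; sv; apply RD_scal; auto. Qed.
Lemma der2_sum N (f : nat -> R -> V2) t v :
  (forall j, (1<=j<=N)%nat -> der2 (f j) t (v j)) ->
  der2 (fun s => sumV2 N (fun j => f j s)) t (sumV2 N v).
Proof.
  intros H; spl;
  [rewrite d1_sumV2; apply RD_ext with (fun s => sumR N (fun j => d1 (f j s)));
     [intro; rewrite d1_sumV2; auto|apply RD_sumR; intros; apply H; auto]
  |rewrite d2_sumV2; apply RD_ext with (fun s => sumR N (fun j => d2 (f j s)));
     [intro; rewrite d2_sumV2; auto|apply RD_sumR; intros; apply H; auto]].
Qed.
Lemma der3_Mi0 n mass len i f t v : der2 f t v ->
  der3 (fun s => Mi0 n mass len i (f s)) t (Mi0 n mass len i v).
Proof. intros; d3; spl; unfold Mi0; sv.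
  apply RD_scal; assumption. apply RD_scal; assumption. apply RD_scal, RD_const. Qed.
Lemma der2_M0 n mass len i f t v : der3 f t v ->
  der2 (fun s => M0 n mass len i (f s)) t (M0 n mass len i v).
Proof. intros; d3; spl; unfold M0; sv; apply RD_scal; assumption. Qed.
Lemma derR_dot3 f g t v w : der3 f t v -> der3 g t w ->
  is_derive (fun s => v3dot (f s) (g s)) t (v3dot v (g t) + v3dot (f t) w).
Proof.
  intros; d3; unfold v3dot; eapply RD_eq.
  apply RD_plus; [apply RD_plus|]; apply RD_mult; eassumption.
  cbv beta; ring.
Qed.
Lemma derR_dot2 f g t v w : der2 f t v -> der2 g t w ->
  is_derive (fun s => v2dot (f s) (g s)) t (v2dot v (g t) + v2dot (f t) w).
Proof.
  intros; d3; unfold v2dot; eapply RD_eq.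
  apply RD_plus; apply RD_mult; eassumption.
  cbv beta; ring.
Qed.

Lemma cnt3_add f g t : cnt3 f t -> cnt3 g t -> cnt3 (fun s => v3add (f s) (g s)) t.
Proof. intros; d3; spl; sv; apply RC_plus; auto. Qed.
Lemma cnt3_scal k f t : cnt3 f t -> cnt3 (fun s => v3scal k (f s)) t.
Proof. intros; d3; spl; sv; apply RC_mult; auto using RC_const. Qed.
Lemma cnt3_opp f t : cnt3 f t -> cnt3 (fun s => v3opp (f s)) t.
Proof. intros; d3; spl; sv; apply RC_opp; auto. Qed.
Lemma cnt3_const (c : V3) t : cnt3 (fun _ => c) t.
Proof. spl; sv; apply RC_const. Qed.
Lemma cnt3_cross f g t : cnt3 f t -> cnt3 g t -> cnt3 (fun s => v3cross (f s) (g s)) t.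
Proof. intros; d3; spl; sv; apply RC_minus; apply RC_mult; auto. Qed.
Lemma cnt3_sum N (f : nat -> R -> V3) t :
  (forall j, (1<=j<=N)%nat -> cnt3 (f j) t) ->
  cnt3 (fun s => sumV3 N (fun j => f j s)) t.
Proof.
  intros H; spl;
  [apply RC_ext with (fun s => sumR N (fun j => c1 (f j s)));
     [intro; rewrite c1_sumV3; auto|apply RC_sumR; intros; apply H; auto]
  |apply RC_ext with (fun s => sumR N (fun j => c2 (f j s)));
     [intro; rewrite c2_sumV3; auto|apply RC_sumR; intros; apply H; auto]
  |apply RC_ext with (fun s => sumR N (fun j => c3 (f j s)));
     [intro; rewrite c3_sumV3; auto|apply RC_sumR; intros; apply H; auto]].
Qed.
Lemma cnt2_const (c : V2) t : cnt2 (fun _ => c) t.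
Proof. spl; sv; apply RC_const. Qed.
Lemma cnt2_add f g t : cnt2 f t -> cnt2 g t -> cnt2 (fun s => v2add (f s) (g s)) t.
Proof. intros; d3; spl; sv; apply RC_plus; auto. Qed.
Lemma cnt2_scal k f t : cnt2 f t -> cnt2 (fun s => v2scal k (f s)) t.
Proof. intros; d3; spl; sv; apply RC_mult; auto using RC_const. Qed.
Lemma cnt2_sum N (f : nat -> R -> V2) t :
  (forall j, (1<=j<=N)%nat -> cnt2 (f j) t) ->
  cnt2 (fun s => sumV2 N (fun j => f j s)) t.
Proof.
  intros H; spl;
  [apply RC_ext with (fun s => sumR N (fun j => d1 (f j s)));
     [intro; rewrite d1_sumV2; auto|apply RC_sumR; intros; apply H; auto]
  |apply RC_ext with (fun s => sumR N (fun j => d2 (f j s)));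
     [intro; rewrite d2_sumV2; auto|apply RC_sumR; intros; apply H; auto]].
Qed.
Lemma cnt3_Mi0 n mass len i f t : cnt2 f t -> cnt3 (fun s => Mi0 n mass len i (f s)) t.
Proof. intros; d3; spl; unfold Mi0; sv; apply RC_mult; auto using RC_const. Qed.
Lemma cnt2_M0 n mass len i f t : cnt3 f t -> cnt2 (fun s => M0 n mass len i (f s)) t.
Proof. intros; d3; spl; unfold M0; sv; apply RC_mult; auto using RC_const. Qed.
Lemma cntR_dot3 f g t : cnt3 f t -> cnt3 g t -> continuous (fun s => v3dot (f s) (g s)) t.
Proof. intros; d3; unfold v3dot; repeat apply RC_plus; apply RC_mult; auto. Qed.
Lemma cntR_dot2 f g t : cnt2 f t -> cnt2 g t -> continuous (fun s => v2dot (f s) (g s)) t.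
Proof. intros; d3; unfold v2dot; repeat apply RC_plus; apply RC_mult; auto. Qed.

Lemma C1V3_der f t : C1_V3 f -> der3 f t (dV3 f t).
Proof. intros (?&?&?); spl; apply C1_der; auto. Qed.
Lemma C1V3_cnt f t : C1_V3 f -> cnt3 f t.
Proof. intros (?&?&?); spl; apply C1_cont; auto. Qed.
Lemma C1V3_dcnt f t : C1_V3 f -> cnt3 (dV3 f) t.
Proof. intros (?&?&?); spl; apply C1_dcont; auto. Qed.
Lemma C2V3_C1 f : C2_V3 f -> C1_V3 f /\ C1_V3 (dV3 f).
Proof. intros ((?&?)&(?&?)&(?&?)); spl; auto. Qed.
Lemma C1V2_der f t : C1_V2 f -> der2 f t (dV2 f t).
Proof. intros (?&?); spl; apply C1_der; auto. Qed.
Lemma C1V2_cnt f t : C1_V2 f -> cnt2 f t.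
Proof. intros (?&?); spl; apply C1_cont; auto. Qed.
Lemma C1V2_dcnt f t : C1_V2 f -> cnt2 (dV2 f) t.
Proof. intros (?&?); spl; apply C1_dcont; auto. Qed.
Lemma C2V2_C1 f : C2_V2 f -> C1_V2 f /\ C1_V2 (dV2 f).
Proof. intros ((?&?)&(?&?)); spl; auto. Qed.

Lemma RD_id t : is_derive (fun s : R => s) t 1.
Proof. apply (is_derive_id t). Qed.

Lemma der3_aff (a b : V3) t : der3 (fun e => v3add a (v3scal e b)) t b.
Proof.
  spl; sv; (eapply RD_eq; [apply RD_plus; [apply RD_const| apply RD_mult; [apply RD_id|apply RD_const]] | cbv beta; ring]).
Qed.
Lemma der2_aff (a b : V2) t : der2 (fun e => v2add a (v2scal e b)) t b.
Proof.
  spl; sv; (eapply RD_eq; [apply RD_plus; [apply RD_const| apply RD_mult; [apply RD_id|apply RD_const]] | cbv beta; ring]).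
Qed.
Lemma dot_aff3 a b c d : is_derive (fun e => v3dot (v3add a (v3scal e b)) (v3add c (v3scal e d))) 0
   (v3dot a d + v3dot b c).
Proof. eapply RD_eq; [apply derR_dot3; apply der3_aff|]. unfold v3dot; sv; ring. Qed.
Lemma dot_aff2 a b c d : is_derive (fun e => v2dot (v2add a (v2scal e b)) (v2add c (v2scal e d))) 0
   (v2dot a d + v2dot b c).
Proof. eapply RD_eq; [apply derR_dot2; apply der2_aff|]. unfold v2dot; sv; ring. Qed.
Lemma dot_caff3 c a b : is_derive (fun e => v3dot c (v3add a (v3scal e b))) 0 (v3dot c b).
Proof. eapply RD_eq; [apply derR_dot3; [apply der3_const|apply der3_aff]|]. unfold v3dot; sv; ring. Qed.

Lemma sumV2_M0_aff n mass len N (Q Rv : nat -> V3) e :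
 sumV2 N (fun i => M0 n mass len i (v3add (Q i) (v3scal e (Rv i)))) =
 v2add (sumV2 N (fun i => M0 n mass len i (Q i))) (v2scal e (sumV2 N (fun i => M0 n mass len i (Rv i)))).
Proof.
  induction N; simpl.
  - apply V2_eq; sv; ring.
  - rewrite IHN. apply V2_eq; unfold M0; sv; ring.
Qed.

Lemma v2dot_comm a b : v2dot a b = v2dot b a.
Proof. unfold v2dot; ring. Qed.
Lemma v3dot_comm a b : v3dot a b = v3dot b a.
Proof. unfold v3dot; ring. Qed.
Definition DL n m mass len g X Y (q0 Q Rv : nat -> V3) :=
  M00 n m mass * v2dot X Y
  + (v2dot X (sumV2 n (fun i => M0 n mass len i (Rv i))) + v2dot Y (sumV2 n (fun i => M0 n mass len i (Q i))))
  + / 2 * sumR n (fun i => sumR n (fun j => Mij n mass len i j * (v3dot (Q i) (Rv j) + v3dot (Rv i) (Q j))))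
  + sumR n (fun i => Mbar n mass i * g * len i * v3dot e3 (q0 i)).

Lemma Lag_deriv n m mass len g X Y (q0 dq0 Q Rv : nat -> V3) :
  is_derive (fun e => Lag n m mass len g (v2add X (v2scal e Y))
       (fun i => v3add (q0 i) (v3scal e (dq0 i)))
       (fun i => v3add (Q i) (v3scal e (Rv i)))) 0 (DL n m mass len g X Y dq0 Q Rv).
Proof.
  unfold Lag, Kin, Pot.
  eapply RD_ext.
  { intro e. rewrite sumV2_M0_aff. reflexivity. }
  eapply RD_eq.
  - apply RD_minus; [apply RD_plus; [apply RD_plus|] | apply RD_opp].
    + apply RD_scal. apply dot_aff2.
    + apply dot_aff2.
    + apply RD_scal. apply RD_sumR; intros i _. apply RD_sumR; intros j _.
      apply RD_scal. apply dot_aff3.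
    + apply RD_sumR; intros i _. apply RD_scal. apply dot_caff3.
  - unfold DL. cbv beta. rewrite (v2dot_comm Y X). field.
Qed.


Definition px n m mass len (x : R -> V2) (q : nat -> R -> V3) s :=
  v2add (v2scal (M00 n m mass) (dV2 x s)) (sumV2 n (fun j => M0 n mass len j (dV3 (q j) s))).
Definition pxd n m mass len (x : R -> V2) (q : nat -> R -> V3) s :=
  v2add (v2scal (M00 n m mass) (dV2 (dV2 x) s)) (sumV2 n (fun j => M0 n mass len j (dV3 (dV3 (q j)) s))).
Definition pv n mass len (x : R -> V2) (q : nat -> R -> V3) i s :=
  v3add (Mi0 n mass len i (dV2 x s)) (sumV3 n (fun j => v3scal (Mij n mass len i j) (dV3 (q j) s))).
Definition pvd n mass len (x : R -> V2) (q : nat -> R -> V3) i s :=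
  v3add (Mi0 n mass len i (dV2 (dV2 x) s)) (sumV3 n (fun j => v3scal (Mij n mass len i j) (dV3 (dV3 (q j)) s))).
Definition Gv n mass len g i := v3scal (Mbar n mass i * g * len i) e3.

Lemma der_px n m mass len x q s : C2_V2 x -> (forall j, (1<=j<=n)%nat -> C2_V3 (q j)) ->
  der2 (px n m mass len x q) s (pxd n m mass len x q s).
Proof.
  intros Hx Hq. apply C2V2_C1 in Hx as [Hx1 Hx2]. unfold px, pxd.
  apply der2_add. apply der2_scal. apply C1V2_der; auto.
  apply der2_sum. intros j Hj. apply der2_M0. apply C1V3_der. exact (proj2 (C2V3_C1 _ (Hq j Hj))).
Qed.
Lemma der_pv n mass len x q i s : C2_V2 x -> (forall j, (1<=j<=n)%nat -> C2_V3 (q j)) ->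
  der3 (pv n mass len x q i) s (pvd n mass len x q i s).
Proof.
  intros Hx Hq. apply C2V2_C1 in Hx as [Hx1 Hx2]. unfold pv, pvd.
  apply der3_add. apply der3_Mi0. apply C1V2_der; auto.
  apply der3_sum. intros j Hj. apply der3_scal. apply C1V3_der. exact (proj2 (C2V3_C1 _ (Hq j Hj))).
Qed.
Lemma cnt_px n m mass len x q s : C2_V2 x -> (forall j, (1<=j<=n)%nat -> C2_V3 (q j)) ->
  cnt2 (px n m mass len x q) s.
Proof.
  intros Hx Hq. apply C2V2_C1 in Hx as [Hx1 Hx2]. unfold px.
  apply cnt2_add. apply cnt2_scal. apply C1V2_dcnt; auto.
  apply cnt2_sum. intros j Hj. apply cnt2_M0. apply C1V3_dcnt. exact (proj1 (C2V3_C1 _ (Hq j Hj))).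
Qed.
Lemma cnt_pxd n m mass len x q s : C2_V2 x -> (forall j, (1<=j<=n)%nat -> C2_V3 (q j)) ->
  cnt2 (pxd n m mass len x q) s.
Proof.
  intros Hx Hq. apply C2V2_C1 in Hx as [Hx1 Hx2]. unfold pxd.
  apply cnt2_add. apply cnt2_scal. apply C1V2_dcnt; auto.
  apply cnt2_sum. intros j Hj. apply cnt2_M0. apply C1V3_dcnt. exact (proj2 (C2V3_C1 _ (Hq j Hj))).
Qed.
Lemma cnt_pv n mass len x q i s : C2_V2 x -> (forall j, (1<=j<=n)%nat -> C2_V3 (q j)) ->
  cnt3 (pv n mass len x q i) s.
Proof.
  intros Hx Hq. apply C2V2_C1 in Hx as [Hx1 Hx2]. unfold pv.
  apply cnt3_add. apply cnt3_Mi0. apply C1V2_dcnt; auto.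
  apply cnt3_sum. intros j Hj. apply cnt3_scal. apply C1V3_dcnt. exact (proj1 (C2V3_C1 _ (Hq j Hj))).
Qed.
Lemma cnt_pvd n mass len x q i s : C2_V2 x -> (forall j, (1<=j<=n)%nat -> C2_V3 (q j)) ->
  cnt3 (pvd n mass len x q i) s.
Proof.
  intros Hx Hq. apply C2V2_C1 in Hx as [Hx1 Hx2]. unfold pvd.
  apply cnt3_add. apply cnt3_Mi0. apply C1V2_dcnt; auto.
  apply cnt3_sum. intros j Hj. apply cnt3_scal. apply C1V3_dcnt. exact (proj2 (C2V3_C1 _ (Hq j Hj))).
Qed.

Lemma C1_cross (f g : R -> V3) : C1_V3 f -> C1_V3 g -> C1_V3 (fun t => v3cross (f t) (g t)).
Proof.
  intros (?&?&?) (?&?&?). unfold C1_V3; cbn [c1 c2 c3 v3cross].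
  refine (conj _ (conj _ _)); apply C1_minus; apply C1_mult; auto.
Qed.

Lemma Mij_sym n mass len i j : Mij n mass len i j = Mij n mass len j i.
Proof. unfold Mij. rewrite Nat.max_comm. ring. Qed.
Lemma v3dot_sum_l N f w : v3dot (sumV3 N f) w = sumR N (fun j => v3dot (f j) w).
Proof. induction N; simpl. unfold v3dot; sv; ring. rewrite <- IHN. unfold v3dot; sv; ring. Qed.
Lemma v3dot_add_l a b w : v3dot (v3add a b) w = v3dot a w + v3dot b w.
Proof. unfold v3dot; sv; ring. Qed.
Lemma v3dot_scal_l k a w : v3dot (v3scal k a) w = k * v3dot a w.
Proof. unfold v3dot; sv; ring. Qed.

Lemma DL_eq n m mass len g X Y (dq0 Q Rv : nat -> V3) :
  DL n m mass len g X Y dq0 Q Rv =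
  v2dot (v2add (v2scal (M00 n m mass) X) (sumV2 n (fun j => M0 n mass len j (Q j)))) Y
  + sumR n (fun i => v3dot (v3add (Mi0 n mass len i X) (sumV3 n (fun j => v3scal (Mij n mass len i j) (Q j)))) (Rv i))
  + sumR n (fun i => v3dot (Gv n mass len g i) (dq0 i)).
Proof.
  unfold DL.
  rewrite (sumR_ext_in n (fun i => v3dot (v3add _ _) (Rv i))
     (fun i => v3dot (Mi0 n mass len i X) (Rv i) + sumR n (fun j => Mij n mass len i j * v3dot (Q j) (Rv i))))
    by (intros i _; rewrite v3dot_add_l, v3dot_sum_l; f_equal; apply sumR_ext_in; intros; apply v3dot_scal_l).
  rewrite sumR_plus.
  rewrite (sumR_ext_in n (fun i => v3dot (Gv n mass len g i) (dq0 i)) (fun i => Mbar n mass i * g * len i * v3dot e3 (dq0 i)))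
    by (intros; unfold Gv; apply v3dot_scal_l).
  assert (H2 : sumR n (fun i => sumR n (fun j => Mij n mass len i j * (v3dot (Q i) (Rv j) + v3dot (Rv i) (Q j))))
     = 2 * sumR n (fun i => sumR n (fun j => Mij n mass len i j * v3dot (Q j) (Rv i)))).
  { rewrite (sumR_ext_in n _ (fun i => sumR n (fun j => Mij n mass len i j * v3dot (Q i) (Rv j))
         + sumR n (fun j => Mij n mass len i j * v3dot (Q j) (Rv i)))).
    2:{ intros i _. rewrite <- sumR_plus. apply sumR_ext_in; intros j _. rewrite (v3dot_comm (Rv i)). ring. }
    rewrite sumR_plus, sumR_swap.
    rewrite (sumR_ext_in n (fun j => sumR n (fun i => Mij n mass len i j * v3dot (Q i) (Rv j)))
       (fun i => sumR n (fun j => Mij n mass len i j * v3dot (Q j) (Rv i)))).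
    ring. intros i _. apply sumR_ext_in; intros j _. rewrite Mij_sym. reflexivity. }
  rewrite H2.
  assert (H3 : v2dot X (sumV2 n (fun i => M0 n mass len i (Rv i))) = sumR n (fun i => v3dot (Mi0 n mass len i X) (Rv i))).
  { unfold v2dot. rewrite d1_sumV2, d2_sumV2, <- !sumR_scal, <- sumR_plus. apply sumR_ext_in; intros.
    unfold M0, Mi0, v3dot; sv; ring. }
  rewrite H3. unfold v2dot; sv. field.
Qed.


Definition rawf n m mass len g (x : R -> V2) (q : nat -> R -> V3) (u dx : R -> V2) (xi : nat -> R -> V3) t :=
 Derive (fun e => Lag n m mass len g (v2add (dV2 x t) (v2scal e (dV2 dx t)))
   (fun i => v3add (q i t) (v3scal e (v3cross (xi i t) (q i t))))
   (fun i => v3add (dV3 (q i) t) (v3scal e (dV3 (fun t0 => v3cross (xi i t0) (q i t0)) t)))) 0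
 + v2dot (u t) (dx t).
Definition rf n m mass len g (x : R -> V2) (q : nat -> R -> V3) (u dx : R -> V2) (xi : nat -> R -> V3) t :=
 v2dot (u t) (dx t) - v2dot (pxd n m mass len x q t) (dx t)
 + sumR n (fun i => v3dot (Gv n mass len g i) (v3cross (xi i t) (q i t))
                    - v3dot (pvd n mass len x q i t) (v3cross (xi i t) (q i t))).
Definition Ff n m mass len (x : R -> V2) (q : nat -> R -> V3) (dx : R -> V2) (xi : nat -> R -> V3) s :=
 v2dot (px n m mass len x q s) (dx s)
 + sumR n (fun i => v3dot (pv n mass len x q i s) (v3cross (xi i s) (q i s))).
Definition Fd n m mass len (x : R -> V2) (q : nat -> R -> V3) (dx : R -> V2) (xi : nat -> R -> V3) s :=
 v2dot (pxd n m mass len x q s) (dx s) + v2dot (px n m mass len x q s) (dV2 dx s)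
 + sumR n (fun i => v3dot (pvd n mass len x q i s) (v3cross (xi i s) (q i s))
     + v3dot (pv n mass len x q i s) (dV3 (fun t0 => v3cross (xi i t0) (q i t0)) s)).

Lemma raw_pt n m mass len g x q u dx xi t :
  rawf n m mass len g x q u dx xi t = Fd n m mass len x q dx xi t + rf n m mass len g x q u dx xi t.
Proof.
  unfold rawf. erewrite is_derive_unique; [|apply Lag_deriv].
  rewrite DL_eq. unfold Fd, rf, px, pv.
  rewrite sumR_plus, sumR_minus. ring.
Qed.

Lemma Ff_der n m mass len x q dx xi s :
  C2_V2 x -> (forall j, (1<=j<=n)%nat -> C2_V3 (q j)) -> C1_V2 dx ->
  (forall i, (1<=i<=n)%nat -> C1_V3 (xi i)) ->
  is_derive (Ff n m mass len x q dx xi) s (Fd n m mass len x q dx xi s).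
Proof.
  intros Hx Hq Hdx Hxi. unfold Ff, Fd. apply RD_plus.
  - apply derR_dot2; [apply der_px; auto | apply C1V2_der; auto].
  - apply RD_sumR; intros i Hi. apply derR_dot3; [apply der_pv; auto|].
    apply C1V3_der, C1_cross; [auto| exact (proj1 (C2V3_C1 _ (Hq i Hi)))].
Qed.
Lemma Fd_cnt n m mass len x q dx xi s :
  C2_V2 x -> (forall j, (1<=j<=n)%nat -> C2_V3 (q j)) -> C1_V2 dx ->
  (forall i, (1<=i<=n)%nat -> C1_V3 (xi i)) ->
  continuous (Fd n m mass len x q dx xi) s.
Proof.
  intros Hx Hq Hdx Hxi. unfold Fd. apply RC_plus; [apply RC_plus|].
  - apply cntR_dot2; [apply cnt_pxd; auto | apply C1V2_cnt; auto].
  - apply cntR_dot2; [apply cnt_px; auto | apply C1V2_dcnt; auto].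
  - apply RC_sumR; intros i Hi. apply RC_plus.
    + apply cntR_dot3; [apply cnt_pvd; auto|]. apply C1V3_cnt, C1_cross; [auto| exact (proj1 (C2V3_C1 _ (Hq i Hi)))].
    + apply cntR_dot3; [apply cnt_pv; auto|]. apply C1V3_dcnt, C1_cross; [auto| exact (proj1 (C2V3_C1 _ (Hq i Hi)))].
Qed.

Lemma Ff_zero n m mass len x q dx xi a :
  dx a = v2zero -> (forall i, (1<=i<=n)%nat -> xi i a = v3zero) -> Ff n m mass len x q dx xi a = 0.
Proof.
  intros H1 H2. unfold Ff. rewrite H1.
  rewrite (sumR_ext_in n _ (fun _ => 0)). rewrite sumR_zero. unfold v2dot; sv; ring.
  intros i Hi. rewrite H2 by auto. unfold v3dot; sv; ring.
Qed.

Lemma RInt_raw_eq n m mass len g x q u dx xi a b :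
  C2_V2 x -> (forall j, (1<=j<=n)%nat -> C2_V3 (q j)) -> C1_V2 dx ->
  (forall i, (1<=i<=n)%nat -> C1_V3 (xi i)) ->
  dx a = v2zero -> dx b = v2zero ->
  (forall i, (1<=i<=n)%nat -> xi i a = v3zero /\ xi i b = v3zero) ->
  ex_RInt (rf n m mass len g x q u dx xi) a b ->
  RInt (rawf n m mass len g x q u dx xi) a b = RInt (rf n m mass len g x q u dx xi) a b.
Proof.
  intros Hx Hq Hdx Hxi Ha Hb Hxab Hex.
  assert (HF : is_RInt (Fd n m mass len x q dx xi) a b
     (minus (Ff n m mass len x q dx xi b) (Ff n m mass len x q dx xi a))).
  { apply (@is_RInt_derive R_CompleteNormedModule); intros; [apply Ff_der|apply Fd_cnt]; auto. }
  rewrite !Ff_zero in HF; auto; try (intros; apply Hxab; auto).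
  apply is_RInt_unique.
  eapply is_RInt_ext; [intros; symmetry; apply raw_pt|].
  replace (RInt (rf n m mass len g x q u dx xi) a b) with (plus (minus 0 0) (RInt (rf n m mass len g x q u dx xi) a b)).
  apply (is_RInt_plus (Fd n m mass len x q dx xi)); auto. apply (@RInt_correct R_CompleteNormedModule); auto.
  rewrite minus_eq_zero, plus_zero_l. reflexivity.
Qed.


Lemma sumV3_ext_in N f g : (forall i, (1<=i<=N)%nat -> f i = g i) -> sumV3 N f = sumV3 N g.
Proof.
  induction N; simpl; intros H; [reflexivity|].
  rewrite IHN by (intros; apply H; lia). rewrite H by lia. reflexivity.
Qed.
Lemma sumV2_ext_in N f g : (forall i, (1<=i<=N)%nat -> f i = g i) -> sumV2 N f = sumV2 N g.
Proof.
  induction N; simpl; intros H; [reflexivity|].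
  rewrite IHN by (intros; apply H; lia). rewrite H by lia. reflexivity.
Qed.
Lemma sumV3_lin (L : V3 -> V3) N f :
  (forall a b, L (v3add a b) = v3add (L a) (L b)) -> L v3zero = v3zero ->
  L (sumV3 N f) = sumV3 N (fun j => L (f j)).
Proof. intros HA H0. induction N; simpl; auto. rewrite HA, IHN; auto. Qed.
Lemma sumV3_split N i f : (1<=i<=N)%nat ->
  sumV3 N f = v3add (f i) (sumV3 N (fun j => if (j =? i)%nat then v3zero else f j)).
Proof.
  intros Hi. apply V3_eq; sv; rewrite ?c1_sumV3, ?c2_sumV3, ?c3_sumV3;
  rewrite (sumR_split N i) by auto; f_equal; apply sumR_ext_in; intros j _;
  destruct (j =? i)%nat; reflexivity.
Qed.

Lemma hat2_add q a b : hat2 q (v3add a b) = v3add (hat2 q a) (hat2 q b).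
Proof. apply V3_eq; unfold hat2, hat; sv; ring. Qed.
Lemma hat2_opp q a : hat2 q (v3opp a) = v3opp (hat2 q a).
Proof. apply V3_eq; unfold hat2, hat; sv; ring. Qed.
Lemma hat2_scal q k a : hat2 q (v3scal k a) = v3scal k (hat2 q a).
Proof. apply V3_eq; unfold hat2, hat; sv; ring. Qed.
Lemma hat2_zero q : hat2 q v3zero = v3zero.
Proof. apply V3_eq; unfold hat2, hat; sv; ring. Qed.
Lemma hat_add q a b : hat q (v3add a b) = v3add (hat q a) (hat q b).
Proof. apply V3_eq; unfold hat; sv; ring. Qed.
Lemma hat_opp q a : hat q (v3opp a) = v3opp (hat q a).
Proof. apply V3_eq; unfold hat; sv; ring. Qed.
Lemma hat_scal q k a : hat q (v3scal k a) = v3scal k (hat q a).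
Proof. apply V3_eq; unfold hat; sv; ring. Qed.
Lemma hat_zero q : hat q v3zero = v3zero.
Proof. apply V3_eq; unfold hat; sv; ring. Qed.

Lemma hat2_gen q v : hat2 q v = v3add (v3scal (v3dot q v) q) (v3scal (- v3norm2 q) v).
Proof. apply V3_eq; unfold hat2, hat, v3norm2, v3dot; sv; ring. Qed.
Lemma hat2_unit q v : v3norm2 q = 1 -> hat2 q v = v3add (v3scal (v3dot q v) q) (v3opp v).
Proof. intros H; rewrite hat2_gen, H. apply V3_eq; sv; ring. Qed.
Lemma hat3 q v : hat q (hat2 q v) = v3scal (- v3norm2 q) (hat q v).
Proof. apply V3_eq; unfold hat2, hat, v3norm2, v3dot; sv; ring. Qed.

Definition ELqL n mass len i (qv : V3) (Xdd : V2) (Qdd : nat -> V3) :=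
  v3add (v3add (v3opp (hat2 qv (Mi0 n mass len i Xdd)))
               (v3scal (Mij n mass len i i) (Qdd i)))
        (v3opp (sumV3 n (fun j => if (j =? i)%nat then v3zero
                   else v3scal (Mij n mass len i j) (hat2 qv (Qdd j))))).
Definition ELqR n mass len g i (qv Qv : V3) :=
  v3add (v3scal (- (v3norm2 Qv * Mij n mass len i i)) qv)
        (v3scal (- (Mbar n mass i * g * len i)) (hat2 qv e3)).
Definition Pv n mass len g i (Xdd : V2) (Qdd : nat -> V3) :=
  v3add (v3add (Mi0 n mass len i Xdd) (sumV3 n (fun j => v3scal (Mij n mass len i j) (Qdd j))))
        (v3opp (Gv n mass len g i)).

Lemma ELq_i_eq n mass len g i qv Qv Xdd Qdd : (1<=i<=n)%nat ->
  v3norm2 qv = 1 -> v3dot qv (Qdd i) = - v3norm2 Qv ->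
  ELqL n mass len i qv Xdd Qdd = v3add (ELqR n mass len g i qv Qv) (v3opp (hat2 qv (Pv n mass len g i Xdd Qdd))).
Proof.
  intros Hi Hn Hd. unfold Pv, ELqL, ELqR.
  rewrite !hat2_add, hat2_opp.
  rewrite (sumV3_lin (hat2 qv)) by (apply hat2_add || apply hat2_zero).
  rewrite (sumV3_split n i (fun j => hat2 qv (v3scal (Mij n mass len i j) (Qdd j)))) by auto.
  rewrite (sumV3_ext_in n (fun j => if (j =? i)%nat then v3zero else hat2 qv (v3scal (Mij n mass len i j) (Qdd j)))
     (fun j => if (j =? i)%nat then v3zero else v3scal (Mij n mass len i j) (hat2 qv (Qdd j))))
     by (intros j _; destruct (j =? i)%nat; [reflexivity| apply hat2_scal]).
  rewrite hat2_scal, (hat2_unit qv (Qdd i)), Hd by auto.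
  unfold Gv. rewrite hat2_scal.
  set (S := sumV3 n _). set (A := hat2 qv (Mi0 n mass len i Xdd)). set (E := hat2 qv e3).
  apply V3_eq; sv; ring.
Qed.

Lemma ELq_i_iff n mass len g i qv Qv Xdd Qdd : (1<=i<=n)%nat ->
  v3norm2 qv = 1 -> v3dot qv (Qdd i) = - v3norm2 Qv ->
  ELqL n mass len i qv Xdd Qdd = ELqR n mass len g i qv Qv <-> hat2 qv (Pv n mass len g i Xdd Qdd) = v3zero.
Proof.
  intros Hi Hn Hd. rewrite (ELq_i_eq n mass len g i qv Qv) by auto.
  set (B := ELqR _ _ _ _ _ _ _). set (H := hat2 _ _). split; intro E.
  - apply V3_eq; apply (f_equal c1) in E as E1; apply (f_equal c2) in E as E2;
    apply (f_equal c3) in E as E3; cbn [c1 c2 c3 v3add v3opp v3zero] in *; lra.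
  - rewrite E. apply V3_eq; sv; ring.
Qed.


Lemma cont_pos (h : R -> R) t0 : continuous h t0 -> 0 < h t0 ->
  exists d, 0 < d /\ forall s, Rabs (s - t0) < d -> 0 < h s.
Proof.
  intros Hc Hp. apply continuity_pt_filterlim in Hc.
  destruct (Hc (h t0 / 2)) as [alp [Ha Hb]]; [lra|].
  exists alp; split; auto. intros s Hs.
  destruct (Req_dec s t0) as [->|Hne]; auto.
  assert (Hd : Rabs (h s - h t0) < h t0 / 2).
  { apply (Hb s). split. split; [constructor| auto]. simpl; unfold R_dist; auto. }
  apply Rabs_def2 in Hd. lra.
Qed.

Definition bump a b s := (s - a) * (s - a) * ((b - s) * (b - s)).
Lemma bump_cont a b s : continuous (bump a b) s.
Proof.
  unfold bump. apply RC_mult; apply RC_mult; apply RC_minus; auto using RC_id, RC_const.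
Qed.
Lemma bump_C1 a b : C1 (bump a b).
Proof.
  unfold bump. apply C1_mult; apply C1_mult; apply C1_minus; auto using C1_id, C1_const.
Qed.
Lemma bump_pos a b s : a < s < b -> 0 < bump a b s.
Proof. intros; unfold bump. assert (0 < s - a) by lra; assert (0 < b - s) by lra.
  apply Rmult_lt_0_compat; apply Rmult_lt_0_compat; auto. Qed.
Lemma bump_a a b : bump a b a = 0.
Proof. unfold bump; ring. Qed.
Lemma bump_b a b : bump a b b = 0.
Proof. unfold bump; ring. Qed.

Lemma FL_pos (h : R -> R) t0 : (forall t, continuous h t) ->
  (forall a b, a < b -> RInt (fun s => bump a b s * h s) a b = 0) -> ~ (0 < h t0).
Proof.
  intros Hc HI Hp. destruct (cont_pos h t0 (Hc t0) Hp) as [d [Hd Hh]].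
  set (a := t0 - d/2). set (b := t0 + d/2).
  assert (Hab : a < b) by (unfold a, b; lra).
  assert (H0 : 0 < RInt (fun s => bump a b s * h s) a b).
  { apply RInt_gt_0; auto.
    - intros s Hs. apply Rmult_lt_0_compat. apply bump_pos; auto.
      apply Hh. unfold a, b in Hs. apply Rabs_def1; lra.
    - intros s _. apply RC_mult; auto using bump_cont. }
  rewrite HI in H0; auto. lra.
Qed.

Lemma FL (h : R -> R) : (forall t, continuous h t) ->
  (forall a b, a < b -> RInt (fun s => bump a b s * h s) a b = 0) -> forall t, h t = 0.
Proof.
  intros Hc HI t0.
  destruct (Rtotal_order (h t0) 0) as [Hlt|[Heq|Hgt]]; auto; exfalso.
  - apply (FL_pos (fun s => - h s) t0).
    + intro t; apply RC_opp; auto.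
    + intros a b Hab.
      rewrite (RInt_ext _ (fun s => opp (bump a b s * h s))) by (intros; unfold opp; simpl; ring).
      rewrite (@RInt_opp R_CompleteNormedModule), HI; auto. unfold opp; simpl; ring.
      apply (@ex_RInt_continuous R_CompleteNormedModule). intros; apply RC_mult; auto using bump_cont.
    + lra.
  - apply (FL_pos h t0); auto.
Qed.


Lemma deriv_const_zero (f : R -> R) t a c : is_derive f t a -> (forall s, f s = c) -> a = 0.
Proof.
  intros H Hc.
  assert (H2 : is_derive f t 0) by (apply RD_ext with (fun _ => c); [intro; symmetry; auto | apply RD_const]).
  pose proof (is_derive_unique _ _ _ H) as E1; pose proof (is_derive_unique _ _ _ H2) as E2.
  rewrite <- E1, <- E2; reflexivity.
Qed.

Lemma unit_d1 (qf : R -> V3) : C1_V3 qf -> (forall t, v3norm2 (qf t) = 1) ->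
  forall t, v3dot (qf t) (dV3 qf t) = 0.
Proof.
  intros H1 Hn t.
  pose proof (derR_dot3 qf qf t _ _ (C1V3_der qf t H1) (C1V3_der qf t H1)) as D.
  apply (deriv_const_zero _ _ _ 1) in D; [|intro s; apply Hn].
  rewrite v3dot_comm in D. lra.
Qed.
Lemma unit_d2 (qf : R -> V3) : C2_V3 qf -> (forall t, v3norm2 (qf t) = 1) ->
  forall t, v3dot (qf t) (dV3 (dV3 qf) t) = - v3norm2 (dV3 qf t).
Proof.
  intros H2 Hn t. destruct (C2V3_C1 _ H2) as [Ha Hb].
  pose proof (derR_dot3 qf (dV3 qf) t _ _ (C1V3_der qf t Ha) (C1V3_der (dV3 qf) t Hb)) as D.
  apply (deriv_const_zero _ _ _ 0) in D; [|intro s; apply unit_d1; auto].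
  unfold v3norm2. lra.
Qed.

Lemma term_zero qv P' G xiv : v3norm2 qv = 1 -> hat2 qv (v3add P' (v3opp G)) = v3zero ->
  v3dot G (v3cross xiv qv) - v3dot P' (v3cross xiv qv) = 0.
Proof.
  intros Hn HP.
  assert (HQ : hat qv (v3add P' (v3opp G)) = v3zero).
  { pose proof (hat3 qv (v3add P' (v3opp G))) as E. rewrite HP, hat_zero, Hn in E.
    apply V3_eq; apply (f_equal c1) in E as E1; apply (f_equal c2) in E as E2;
    apply (f_equal c3) in E as E3; cbn [c1 c2 c3 v3scal v3zero] in *; lra. }
  transitivity (- v3dot xiv (hat qv (v3add P' (v3opp G)))).
  - unfold v3dot, hat; sv; ring.
  - rewrite HQ; unfold v3dot; sv; ring.
Qed.

Lemma EL_to_LdA n m mass len g x q u :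
  C2_V2 x -> (forall i, (1 <= i <= n)%nat -> C2_V3 (q i)) ->
  (forall i t, (1 <= i <= n)%nat -> v3norm2 (q i t) = 1) ->
  EL_q n m mass len g x q u -> LdA n m mass len g x q u.
Proof.
  intros Hx Hq Hn HEL a b Hab dx xi Hdx Hxi Hdot Ha Hb Hend.
  change (RInt (rawf n m mass len g x q u dx xi) a b = 0).
  assert (Hr0 : forall t, rf n m mass len g x q u dx xi t = 0).
  { intro t. destruct (HEL t) as [Hx0 Hi]. unfold rf.
    change (pxd n m mass len x q t = u t) in Hx0. rewrite Hx0.
    rewrite (sumR_ext_in n _ (fun _ => 0)). rewrite sumR_zero. ring.
    intros i Hii. specialize (Hi i Hii).
    apply term_zero; [apply Hn; auto|].
    apply (proj1 (ELq_i_iff n mass len g i (q i t) (dV3 (q i) t) (dV2 (dV2 x) t)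
                (fun j => dV3 (dV3 (q j)) t) Hii (Hn i t Hii)
                (unit_d2 (q i) (Hq i Hii) (fun s => Hn i s Hii) t))).
    exact Hi. }
  rewrite RInt_raw_eq; auto.
  - rewrite (RInt_ext _ (fun _ => 0)) by (intros; apply Hr0).
    rewrite RInt_const. unfold scal; simpl. unfold mult; simpl. ring.
  - apply (ex_RInt_ext (fun _ => 0)). intros; symmetry; apply Hr0.
    apply (@ex_RInt_const R_NormedModule).
Qed.

Lemma C1V3_scalf (h : R -> R) (f : R -> V3) : C1 h -> C1_V3 f -> C1_V3 (fun s => v3scal (h s) (f s)).
Proof. intros H (?&?&?). unfold C1_V3; cbn [c1 c2 c3 v3scal]. refine (conj _ (conj _ _)); apply C1_mult; auto. Qed.
Lemma C1V3_const (w : V3) : C1_V3 (fun _ => w).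
Proof. refine (conj _ (conj _ _)); apply C1_const. Qed.

Lemma test_x n m mass len g x q u (w : V2) :
  C2_V2 x -> (forall i, (1 <= i <= n)%nat -> C2_V3 (q i)) -> cont_V2 u ->
  LdA n m mass len g x q u ->
  forall t, v2dot (u t) w - v2dot (pxd n m mass len x q t) w = 0.
Proof.
  intros Hx Hq Hu HL.
  apply FL.
  - intro t. apply RC_minus; apply cntR_dot2; try apply cnt2_const.
    destruct Hu; split; auto. apply cnt_pxd; auto.
  - intros a b Hab.
    set (dx := fun s => v2scal (bump a b s) w).
    set (xi := fun (_ : nat) (_ : R) => v3zero).
    assert (Hdx : C1_V2 dx).
    { split; unfold dx; cbn [d1 d2 v2scal]; apply C1_mult; auto using bump_C1, C1_const. }
    assert (Hrf : forall s, rf n m mass len g x q u dx xi s =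
              bump a b s * (v2dot (u s) w - v2dot (pxd n m mass len x q s) w)).
    { intro s. unfold rf. rewrite (sumR_ext_in n _ (fun _ => 0)).
      rewrite sumR_zero. unfold dx, v2dot; sv; ring.
      intros; unfold xi, v3dot; sv; ring. }
    assert (Hex : ex_RInt (rf n m mass len g x q u dx xi) a b).
    { apply (ex_RInt_ext (fun s => bump a b s * (v2dot (u s) w - v2dot (pxd n m mass len x q s) w))).
      intros; symmetry; apply Hrf.
      apply (@ex_RInt_continuous R_CompleteNormedModule). intros; apply RC_mult; [apply bump_cont|].
      apply RC_minus; apply cntR_dot2; try apply cnt2_const.
      destruct Hu; split; auto. apply cnt_pxd; auto. }
    pose proof (HL a b Hab dx xi Hdx) as H.
    assert (Hxi : forall i, (1<=i<=n)%nat -> C1_V3 (xi i)) by (intros; apply C1V3_const).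
    specialize (H Hxi).
    assert (Hd0 : forall i t, (1<=i<=n)%nat -> v3dot (xi i t) (q i t) = 0) by (intros; unfold xi, v3dot; sv; ring).
    specialize (H Hd0).
    assert (Ha : dx a = v2zero) by (unfold dx; rewrite bump_a; apply V2_eq; sv; ring).
    assert (Hb : dx b = v2zero) by (unfold dx; rewrite bump_b; apply V2_eq; sv; ring).
    specialize (H Ha Hb).
    assert (He : forall i, (1<=i<=n)%nat -> xi i a = v3zero /\ xi i b = v3zero) by (intros; split; reflexivity).
    specialize (H He).
    change (RInt (rawf n m mass len g x q u dx xi) a b = 0) in H.
    rewrite RInt_raw_eq in H; auto.
    rewrite <- H. symmetry. apply RInt_ext. intros; apply Hrf.
Qed.

Lemma test_i n m mass len g x q u i (w : V3) :
  (1 <= i <= n)%nat ->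
  C2_V2 x -> (forall i, (1 <= i <= n)%nat -> C2_V3 (q i)) ->
  LdA n m mass len g x q u ->
  forall t, v3dot w (hat2 (q i t) (v3add (pvd n mass len x q i t) (v3opp (Gv n mass len g i)))) = 0.
Proof.
  intros Hi Hx Hq HL.
  assert (Hq1 : C1_V3 (q i)) by exact (proj1 (C2V3_C1 _ (Hq i Hi))).
  assert (Hcnt : forall t, continuous (fun s => v3dot w (hat2 (q i s) (v3add (pvd n mass len x q i s) (v3opp (Gv n mass len g i))))) t).
  { intro t. apply cntR_dot3; [apply cnt3_const|]. unfold hat2, hat.
    apply cnt3_cross; [apply C1V3_cnt; auto|]. apply cnt3_cross; [apply C1V3_cnt; auto|].
    apply cnt3_add; [apply cnt_pvd; auto| apply cnt3_const]. }
  apply FL; auto.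
  intros a b Hab.
  set (dx := fun _ : R => v2zero).
  set (xi := fun (j : nat) (s : R) => if (j =? i)%nat then v3scal (bump a b s) (v3cross (q i s) w) else v3zero).
  assert (Hdx : C1_V2 dx) by (unfold dx, C1_V2; cbn [d1 d2 v2zero]; exact (conj (C1_const 0) (C1_const 0))).
  assert (Hrf : forall s, rf n m mass len g x q u dx xi s =
            bump a b s * v3dot w (hat2 (q i s) (v3add (pvd n mass len x q i s) (v3opp (Gv n mass len g i))))).
  { intro s. unfold rf. rewrite (sumR_single n i) by (auto; intros j Hj; unfold xi;
       apply Nat.eqb_neq in Hj; rewrite Hj; unfold v3dot; sv; ring).
    unfold xi. rewrite Nat.eqb_refl. unfold dx.
    set (P := pvd n mass len x q i s). set (G := Gv n mass len g i).
    unfold v2dot, v3dot, hat2, hat; sv; ring. }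
  assert (Hex : ex_RInt (rf n m mass len g x q u dx xi) a b).
  { eapply ex_RInt_ext. intros; symmetry; apply Hrf.
    apply (@ex_RInt_continuous R_CompleteNormedModule). intros; apply RC_mult; [apply bump_cont|apply Hcnt]. }
  pose proof (HL a b Hab dx xi Hdx) as H.
  assert (Hxi : forall j, (1<=j<=n)%nat -> C1_V3 (xi j)).
  { intros j Hj. unfold xi. destruct (j =? i)%nat; [|apply C1V3_const].
    apply C1V3_scalf; [apply bump_C1|]. apply C1_cross; auto using C1V3_const. }
  specialize (H Hxi).
  assert (Hd0 : forall j t, (1<=j<=n)%nat -> v3dot (xi j t) (q j t) = 0).
  { intros j t Hj. unfold xi. destruct (Nat.eqb_spec j i) as [->|].
    unfold v3dot; sv; ring. unfold v3dot; sv; ring. }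
  specialize (H Hd0 eq_refl eq_refl).
  assert (He : forall j, (1<=j<=n)%nat -> xi j a = v3zero /\ xi j b = v3zero).
  { intros j Hj; unfold xi; destruct (j =? i)%nat; [rewrite bump_a, bump_b|]; split;
    try reflexivity; apply V3_eq; sv; ring. }
  specialize (H He).
  change (RInt (rawf n m mass len g x q u dx xi) a b = 0) in H.
  rewrite (RInt_raw_eq n m mass len g x q u dx xi a b Hx Hq Hdx Hxi eq_refl eq_refl He Hex) in H.
  rewrite <- H. symmetry. apply RInt_ext. intros; apply Hrf.
Qed.

Lemma LdA_to_EL n m mass len g x q u :
  C2_V2 x -> (forall i, (1 <= i <= n)%nat -> C2_V3 (q i)) ->
  (forall i t, (1 <= i <= n)%nat -> v3norm2 (q i t) = 1) -> cont_V2 u ->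
  LdA n m mass len g x q u -> EL_q n m mass len g x q u.
Proof.
  intros Hx Hq Hn Hu HL t. split.
  - change (pxd n m mass len x q t = u t).
    pose proof (test_x n m mass len g x q u (mkV2 1 0) Hx Hq Hu HL t) as E1.
    pose proof (test_x n m mass len g x q u (mkV2 0 1) Hx Hq Hu HL t) as E2.
    unfold v2dot in *; cbn [d1 d2] in *. apply V2_eq; lra.
  - intros i Hi.
    apply (proj2 (ELq_i_iff n mass len g i (q i t) (dV3 (q i) t) (dV2 (dV2 x) t)
                (fun j => dV3 (dV3 (q j)) t) Hi (Hn i t Hi)
                (unit_d2 (q i) (Hq i Hi) (fun s => Hn i s Hi) t))).
    pose proof (test_i n m mass len g x q u i (mkV3 1 0 0) Hi Hx Hq HL t) as E1.
    pose proof (test_i n m mass len g x q u i (mkV3 0 1 0) Hi Hx Hq HL t) as E2.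
    pose proof (test_i n m mass len g x q u i (mkV3 0 0 1) Hi Hx Hq HL t) as E3.
    change (hat2 (q i t) (v3add (pvd n mass len x q i t) (v3opp (Gv n mass len g i))) = v3zero).
    set (H := hat2 _ _) in *.
    unfold v3dot in *; cbn [c1 c2 c3] in *. apply V3_eq; cbn [c1 c2 c3 v3zero]; lra.
Qed.


Definition ELomL n mass len i (qs Omd : nat -> V3) (Xdd : V2) :=
  v3add (v3add (hat (qs i) (Mi0 n mass len i Xdd))
               (v3scal (Mij n mass len i i) (Omd i)))
        (v3opp (sumV3 n (fun j => if (j =? i)%nat then v3zero
                   else v3scal (Mij n mass len i j) (hat (qs i) (hat (qs j) (Omd j)))))).
Definition ELomR n mass len g i (qs Om : nat -> V3) :=
  v3add (sumV3 n (fun j => if (j =? i)%nat then v3zero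
               else v3scal (Mij n mass len i j * v3norm2 (Om j)) (hat (qs i) (qs j))))
        (v3scal (Mbar n mass i * g * len i) (hat (qs i) e3)).

Lemma sumR_opp N f : sumR N (fun i => - f i) = - sumR N f.
Proof. induction N; simpl; [ring|rewrite IHN; ring]. Qed.

Lemma ELom_i_eq n mass len g i qs Om Omd Xdd Qdd : (1<=i<=n)%nat ->
  (forall j, (1<=j<=n)%nat -> Qdd j = v3add (v3opp (hat (qs j) (Omd j))) (v3scal (- v3norm2 (Om j)) (qs j))) ->
  v3norm2 (qs i) = 1 -> v3dot (qs i) (Omd i) = 0 ->
  ELomL n mass len i qs Omd Xdd = v3add (ELomR n mass len g i qs Om) (hat (qs i) (Pv n mass len g i Xdd Qdd)).
Proof.
  intros Hi HQ Hn Hd. unfold Pv, ELomL, ELomR.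
  rewrite !hat_add, hat_opp.
  rewrite (sumV3_lin (hat (qs i))) by (apply hat_add || apply hat_zero).
  rewrite (sumV3_split n i (fun j => hat (qs i) (v3scal (Mij n mass len i j) (Qdd j)))) by auto.
  set (S1 := sumV3 n (fun j => if (j =? i)%nat then v3zero
                   else v3scal (Mij n mass len i j) (hat (qs i) (hat (qs j) (Omd j))))).
  set (S2 := sumV3 n (fun j => if (j =? i)%nat then v3zero
               else v3scal (Mij n mass len i j * v3norm2 (Om j)) (hat (qs i) (qs j)))).
  assert (ES : sumV3 n (fun j => if (j =? i)%nat then v3zero else hat (qs i) (v3scal (Mij n mass len i j) (Qdd j)))
       = v3add (v3opp S1) (v3opp S2)).
  { unfold S1, S2. apply V3_eq; sv; rewrite ?c1_sumV3, ?c2_sumV3, ?c3_sumV3, <- !sumR_opp, <- sumR_plus;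
    apply sumR_ext_in; intros j Hj; destruct (j =? i)%nat; sv; try ring;
    rewrite HQ by auto; unfold hat; sv; ring. }
  rewrite ES.
  rewrite (HQ i Hi). rewrite hat_scal, hat_add, hat_opp.
  assert (E2 : hat (qs i) (hat (qs i) (Omd i)) = v3opp (Omd i)).
  { change (hat2 (qs i) (Omd i) = v3opp (Omd i)). rewrite hat2_unit, Hd by auto.
    apply V3_eq; sv; ring. }
  rewrite E2. unfold Gv. rewrite hat_scal.
  set (A := hat (qs i) (Mi0 n mass len i Xdd)). 
  apply V3_eq; unfold hat, e3; sv; ring.
Qed.

Lemma ELom_i_iff n mass len g i qs Om Omd Xdd Qdd : (1<=i<=n)%nat ->
  (forall j, (1<=j<=n)%nat -> Qdd j = v3add (v3opp (hat (qs j) (Omd j))) (v3scal (- v3norm2 (Om j)) (qs j))) ->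
  v3norm2 (qs i) = 1 -> v3dot (qs i) (Omd i) = 0 ->
  ELomL n mass len i qs Omd Xdd = ELomR n mass len g i qs Om <-> hat (qs i) (Pv n mass len g i Xdd Qdd) = v3zero.
Proof.
  intros Hi HQ Hn Hd. rewrite (ELom_i_eq n mass len g i qs Om Omd Xdd Qdd) by auto.
  set (B := ELomR _ _ _ _ _ _ _). set (H := hat _ _). split; intro E.
  - apply V3_eq; apply (f_equal c1) in E as E1; apply (f_equal c2) in E as E2;
    apply (f_equal c3) in E as E3; cbn [c1 c2 c3 v3add v3opp v3zero] in *; lra.
  - rewrite E. apply V3_eq; sv; ring.
Qed.

Lemma hat2_hat_iff qv P : v3norm2 qv = 1 -> (hat2 qv P = v3zero <-> hat qv P = v3zero).
Proof.
  intros Hn; split; intro HP.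
  - pose proof (hat3 qv P) as E. rewrite HP, hat_zero, Hn in E.
    apply V3_eq; apply (f_equal c1) in E as E1; apply (f_equal c2) in E as E2;
    apply (f_equal c3) in E as E3; cbn [c1 c2 c3 v3scal v3zero] in *; lra.
  - unfold hat2. rewrite HP. apply hat_zero.
Qed.

Lemma der3_dV3 f t v : der3 f t v -> dV3 f t = v.
Proof. intros (?&?&?). apply V3_eq; unfold dV3; sv; apply is_derive_unique; auto. Qed.
Lemma der3_ext f g t v : (forall s, f s = g s) -> der3 g t v -> der3 f t v.
Proof. intros E (?&?&?). spl; (eapply RD_ext; [|eassumption]); intro s; rewrite E; reflexivity. Qed.

Lemma Qdd_form (qf om : R -> V3) t : C2_V3 qf -> C1_V3 om ->
  (forall s, dV3 qf s = v3cross (om s) (qf s) /\ v3dot (om s) (qf s) = 0) ->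
  dV3 (dV3 qf) t = v3add (v3opp (hat (qf t) (dV3 om t))) (v3scal (- v3norm2 (om t)) (qf t)).
Proof.
  intros H2 H1 Hr. destruct (C2V3_C1 _ H2) as [Hq1 _].
  rewrite (der3_dV3 _ t (v3add (v3cross (dV3 om t) (qf t)) (v3cross (om t) (dV3 qf t)))).
  - destruct (Hr t) as [E1 E2]. rewrite E1.
    transitivity (v3add (v3opp (hat (qf t) (dV3 om t)))
                   (v3add (v3scal (v3dot (om t) (qf t)) (om t)) (v3scal (- v3norm2 (om t)) (qf t)))).
    + apply V3_eq; unfold hat, v3norm2, v3dot; sv; ring.
    + rewrite E2. apply V3_eq; sv; ring.
  - apply der3_ext with (fun s => v3cross (om s) (qf s)). intro s; apply Hr.
    apply der3_cross; apply C1V3_der; auto.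
Qed.

Lemma omd_dot (qf om : R -> V3) t : C2_V3 qf -> C1_V3 om ->
  (forall s, dV3 qf s = v3cross (om s) (qf s) /\ v3dot (om s) (qf s) = 0) ->
  v3dot (qf t) (dV3 om t) = 0.
Proof.
  intros H2 H1 Hr. destruct (C2V3_C1 _ H2) as [Hq1 _].
  pose proof (derR_dot3 om qf t _ _ (C1V3_der om t H1) (C1V3_der qf t Hq1)) as D.
  apply (deriv_const_zero _ _ _ 0) in D; [|intro s; apply Hr].
  destruct (Hr t) as [E1 _]. rewrite E1 in D.
  assert (Z : v3dot (om t) (v3cross (om t) (qf t)) = 0) by (unfold v3dot; sv; ring).
  rewrite v3dot_comm. lra.
Qed.

Lemma x_iff n m mass len (Xdd : V2) (U : V2) qs Om Omd Qdd :
  (forall j, (1<=j<=n)%nat -> Qdd j = v3add (v3opp (hat (qs j) (Omd j))) (v3scal (- v3norm2 (Om j)) (qs j))) ->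
  (v2add (v2scal (M00 n m mass) Xdd) (sumV2 n (fun j => M0 n mass len j (Qdd j))) = U <->
   v2add (v2scal (M00 n m mass) Xdd) (v2scal (-1) (sumV2 n (fun j => M0 n mass len j (hat (qs j) (Omd j)))))
   = v2add (sumV2 n (fun j => M0 n mass len j (v3scal (v3norm2 (Om j)) (qs j)))) U).
Proof.
  intros HQ.
  assert (E1 : d1 (sumV2 n (fun j => M0 n mass len j (Qdd j))) =
     - d1 (sumV2 n (fun j => M0 n mass len j (hat (qs j) (Omd j))))
     - d1 (sumV2 n (fun j => M0 n mass len j (v3scal (v3norm2 (Om j)) (qs j))))).
  { rewrite !d1_sumV2, <- sumR_opp, <- sumR_minus. apply sumR_ext_in; intros j Hj.
    rewrite HQ by auto. unfold M0, hat; sv; ring. }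
  assert (E2 : d2 (sumV2 n (fun j => M0 n mass len j (Qdd j))) =
     - d2 (sumV2 n (fun j => M0 n mass len j (hat (qs j) (Omd j))))
     - d2 (sumV2 n (fun j => M0 n mass len j (v3scal (v3norm2 (Om j)) (qs j))))).
  { rewrite !d2_sumV2, <- sumR_opp, <- sumR_minus. apply sumR_ext_in; intros j Hj.
    rewrite HQ by auto. unfold M0, hat; sv; ring. }
  split; intro E.
  - apply (f_equal d1) in E as F1; apply (f_equal d2) in E as F2.
    apply V2_eq; cbn [d1 d2 v2add v2scal] in *; lra.
  - apply (f_equal d1) in E as F1; apply (f_equal d2) in E as F2.
    apply V2_eq; cbn [d1 d2 v2add v2scal] in *; lra.
Qed.

Theorem proposition1
  (n : nat) (m : R) (mass len : nat -> R) (g : R)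
  (Hn : (1 <= n)%nat) (Hm : 0 < m) (Hg : 0 < g)
  (Hmass : forall i, (1 <= i <= n)%nat -> 0 < mass i)
  (Hlen : forall i, (1 <= i <= n)%nat -> 0 < len i)
  (x : R -> V2) (q : nat -> R -> V3) (u : R -> V2)
  (Hx : C2_V2 x)
  (Hq : forall i, (1 <= i <= n)%nat -> C2_V3 (q i))
  (HqS2 : forall i t, (1 <= i <= n)%nat -> v3norm2 (q i t) = 1)
  (Hu : cont_V2 u) :
  (LdA n m mass len g x q u <-> EL_q n m mass len g x q u) /\
  (forall om : nat -> R -> V3,
     (forall i, (1 <= i <= n)%nat -> C1_V3 (om i)) ->
     (forall i t, (1 <= i <= n)%nat ->
        dV3 (q i) t = v3cross (om i t) (q i t) /\ v3dot (om i t) (q i t) = 0) ->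
     (EL_q n m mass len g x q u <-> EL_omega n m mass len g x q om u)).
Proof.
  split.
  - split.
    + apply LdA_to_EL; auto.
    + apply EL_to_LdA; auto.
  - intros om Hom Hrel.
    assert (HQ : forall t j, (1<=j<=n)%nat -> dV3 (dV3 (q j)) t =
       v3add (v3opp (hat (q j t) (dV3 (om j) t))) (v3scal (- v3norm2 (om j t)) (q j t))).
    { intros t j Hj. apply Qdd_form; [auto|auto|intros s; apply Hrel; auto]. }
    assert (Hod : forall t i, (1<=i<=n)%nat -> v3dot (q i t) (dV3 (om i) t) = 0).
    { intros t i Hi. apply omd_dot; [auto|auto|intros s; apply Hrel; auto]. }
    assert (Hi_iff : forall t i, (1<=i<=n)%nat ->
      (ELqL n mass len i (q i t) (dV2 (dV2 x) t) (fun j => dV3 (dV3 (q j)) t)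
         = ELqR n mass len g i (q i t) (dV3 (q i) t) <->
       ELomL n mass len i (fun j => q j t) (fun j => dV3 (om j) t) (dV2 (dV2 x) t)
         = ELomR n mass len g i (fun j => q j t) (fun j => om j t))).
    { intros t i Hi.
      rewrite (ELq_i_iff n mass len g i (q i t) (dV3 (q i) t) (dV2 (dV2 x) t)
                (fun j => dV3 (dV3 (q j)) t) Hi (HqS2 i t Hi)
                (unit_d2 (q i) (Hq i Hi) (fun s => HqS2 i s Hi) t)).
      rewrite hat2_hat_iff by auto.
      rewrite (ELom_i_iff n mass len g i (fun j => q j t) (fun j => om j t) (fun j => dV3 (om j) t)
                (dV2 (dV2 x) t) (fun j => dV3 (dV3 (q j)) t) Hi).
      reflexivity. intros j Hj; apply HQ; auto. apply HqS2; auto. apply Hod; auto. }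
    assert (Hx_iff := fun t => x_iff n m mass len (dV2 (dV2 x) t) (u t) (fun j => q j t)
        (fun j => om j t) (fun j => dV3 (om j) t) (fun j => dV3 (dV3 (q j)) t)
        (fun j Hj => HQ t j Hj)).
    split; intros H t; destruct (H t) as [H0 H1]; split.
    + apply (Hx_iff t); exact H0.
    + intros i Hi. apply (Hi_iff t i Hi). exact (H1 i Hi).
    + apply (Hx_iff t); exact H0.
    + intros i Hi. apply (Hi_iff t i Hi). exact (H1 i Hi).
Qed.
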